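(* Let $\mathbb{K}\in\{\mathbb{R},\mathbb{C}\}$, $\mathbf{R}_U\in\mathbb{K}^{n\times n}$ self-adjoint positive definite, $U:=\mathbb{K}^n$ with $\langle\mathbf{x},\mathbf{y}\rangle_U:=\langle\mathbf{R}_U\mathbf{x},\mathbf{y}\rangle$, norm $\|\cdot\|_U$, and dual norm $\|\mathbf{y}\|_{U'}:=\langle\mathbf{y},\mathbf{R}_U^{-1}\mathbf{y}\rangle^{1/2}$. Fix $\mu$, $\mathbf{A}(\mu)\in\mathbb{K}^{n\times n}$, $\mathbf{b}(\mu)\in\mathbb{K}^n$, $\mathbf{u}(\mu)$ with $\mathbf{A}(\mu)\mathbf{u}(\mu)=\mathbf{b}(\mu)$, a subspace $U_r\subseteq U$ and $\mathbf{\Theta}\in\mathbb{K}^{k\times n}$. Define $\|\mathbf{y}\|_{U_r'}:=\max_{\mathbf{w}\in U_r\setminus\{\mathbf{0}\}}|\langle\mathbf{y},\mathbf{w}\rangle|/\|\mathbf{w}\|_U$ and $\|\mathbf{y}\|_{U_r'}^{\mathbf{\Theta}}:=\max_{\mathbf{x}\in U_r\setminus\{\mathbf{0}\}}|\langle\mathbf{\Theta}\mathbf{R}_U^{-1}\mathbf{y},\mathbf{\Theta}\mathbf{x}\rangle|/\|\mathbf{\Theta}\mathbf{x}\|$; $\alpha_r(\mu):=\min_{\mathbf{x}\in U_r\setminus\{\mathbf{0}\}}\|\mathbf{A}(\mu)\mathbf{x}\|_{U_r'}/\|\mathbf{x}\|_U$, $\beta_r(\mu):=\max_{\mathbf{x}\in(\mathrm{span}\{\mathbf{u}(\mu)\}+U_r)\setminus\{\mathbf{0}\}}\|\mathbf{A}(\mu)\mathbf{x}\|_{U_r'}/\|\mathbf{x}\|_U$,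 $\beta(\mu):=\max_{\mathbf{x}\in U\setminus\{\mathbf{0}\}}\|\mathbf{A}(\mu)\mathbf{x}\|_{U'}/\|\mathbf{x}\|_U$; $\alpha_r^{\mathbf{\Theta}}(\mu)$ and $\beta_r^{\mathbf{\Theta}}(\mu)$ defined as $\alpha_r(\mu),\beta_r(\mu)$ with $\|\cdot\|_{U_r'}$ replaced by $\|\cdot\|_{U_r'}^{\mathbf{\Theta}}$ (denominators still $\|\mathbf{x}\|_U$); and $$a_r(\mu):=\max_{\mathbf{w}\in U_r\setminus\{\mathbf{0}\}}\frac{\|\mathbf{A}(\mu)\mathbf{w}\|_{U'}}{\|\mathbf{A}(\mu)\mathbf{w}\|_{U_r'}}.$$ Let $Y_r(\mu):=U_r+\mathrm{span}\{\mathbf{R}_U^{-1}(\mathbf{b}(\mu)-\mathbf{A}(\mu)\mathbf{x}):\mathbf{x}\in U_r\}$. If for some $\varepsilon\in[0,1)$, $|\langle\mathbf{x},\mathbf{y}\rangle_U-\langle\mathbf{\Theta}\mathbf{x},\mathbf{\Theta}\mathbf{y}\rangle|\le\varepsilon\|\mathbf{x}\|_U\|\mathbf{y}\|_U$ for all $\mathbf{x},\mathbf{y}\in Y_r(\mu)$, then $$\alpha_r^{\mathbf{\Theta}}(\mu)\ge\frac{1}{\sqrt{1+\varepsilon}}(1-\varepsilon a_r(\mu))\alpha_r(\mu),\qquad\beta_r^{\mathbf{\Theta}}(\mu)\le\frac{1}{\sqrt{1-\varepsilon}}(\beta_r(\mu)+\varepsilon\beta(\mu)).$$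
   Context: $\langle\mathbf{x},\mathbf{y}\rangle=\mathbf{x}^{\mathrm{H}}\mathbf{y}$ is the canonical inner product and $\|\cdot\|$ the Euclidean norm. *)

(* Defs.v *)
From HB Require Import structures.
From mathcomp Require Import all_boot all_order all_algebra.
From mathcomp Require Import boolp classical_sets reals.
From mathcomp.real_closed Require Import complex.

Set Implicit Arguments.
Unset Strict Implicit.
Unset Printing Implicit Defensive.

Import Order.TTheory GRing.Theory Num.Theory.
Local Open Scope ring_scope.
Local Open Scope classical_set_scope.

Inductive scalar_kind := RealK | ComplexK.

Definition Kfield (R : realType) (c : scalar_kind) : numFieldType :=
  match c with RealK => R | ComplexK => (R[i] : numFieldType) end.

Definition Kconj (R : realType) (c : scalar_kind) : Kfield R c -> Kfield R c :=
  match c with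
  | RealK => fun x => x
  | ComplexK => fun x : R[i] => conjc x
  end.

Definition Kabs (R : realType) (c : scalar_kind) : Kfield R c -> R :=
  match c with
  | RealK => fun x : R => `|x|
  | ComplexK => fun x : R[i] => ComplexField.Normc.normc x
  end.

Definition Kre (R : realType) (c : scalar_kind) : Kfield R c -> R :=
  match c with
  | RealK => fun x : R => x
  | ComplexK => fun x : R[i] => complex.Re x
  end.

Section Defs.
Variables (R : realType) (c : scalar_kind).
Local Notation K := (Kfield R c).
Local Notation conj := (@Kconj R c).

Definition adjmx m n (A : 'M[K]_(m, n)) : 'M[K]_(n, m) := (map_mx conj A)^T.

Definition dotp n (x y : 'cV[K]_n) : K := \sum_(i < n) conj (x i 0) * y i 0.

Definition enorm n (x : 'cV[K]_n) : R := Num.sqrt (@Kre R c (dotp x x)).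

Definition spd n (RU : 'M[K]_n) : Prop :=
  adjmx RU = RU /\ forall x : 'cV[K]_n, x != 0 -> 0 < dotp x (RU *m x).

Variables (n : nat) (RU : 'M[K]_n).

Definition dotU (x y : 'cV[K]_n) : K := dotp (RU *m x) y.
Definition normU (x : 'cV[K]_n) : R := Num.sqrt (@Kre R c (dotU x x)).

Definition dualU (y : 'cV[K]_n) : R := Num.sqrt (@Kre R c (dotp y (invmx RU *m y))).

Definition sspan (S : set 'cV[K]_n) : set 'cV[K]_n :=
  [set v | exists (s : seq 'cV[K]_n) (a : seq K),
      (forall x, x \in s -> S x) /\ v = \sum_(i < size s) a`_i *: s`_i].

Definition sumset (S T : set 'cV[K]_n) : set 'cV[K]_n :=
  [set x + y | x in S & y in T].

Definition vsset (V : {vspace 'cV[K]_n}) : set 'cV[K]_n := [set x | x \in V].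

Definition maxr (S : set 'cV[K]_n) (f : 'cV[K]_n -> R) : R :=
  sup [set f x | x in [set x | S x /\ x != 0]].
Definition minr (S : set 'cV[K]_n) (f : 'cV[K]_n -> R) : R :=
  inf [set f x | x in [set x | S x /\ x != 0]].

Variables (Ur : {vspace 'cV[K]_n}) (k : nat) (Theta : 'M[K]_(k, n)).

Definition dualUr (y : 'cV[K]_n) : R :=
  maxr (vsset Ur) (fun w => @Kabs R c (dotp y w) / normU w).

Definition dualUrTh (y : 'cV[K]_n) : R :=
  maxr (vsset Ur)
    (fun x => @Kabs R c (dotp (Theta *m (invmx RU *m y)) (Theta *m x)) / enorm (Theta *m x)).

Variables (A : 'M[K]_n) (b u : 'cV[K]_n).

Definition alpha_r : R := minr (vsset Ur) (fun x => dualUr (A *m x) / normU x).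
Definition beta_r : R :=
  maxr (sumset (sspan [set u]) (vsset Ur)) (fun x => dualUr (A *m x) / normU x).
Definition beta : R := maxr setT (fun x => dualU (A *m x) / normU x).
Definition alpha_rTh : R := minr (vsset Ur) (fun x => dualUrTh (A *m x) / normU x).
Definition beta_rTh : R :=
  maxr (sumset (sspan [set u]) (vsset Ur)) (fun x => dualUrTh (A *m x) / normU x).
Definition a_r : R :=
  maxr (vsset Ur) (fun w => dualU (A *m w) / dualUr (A *m w)).

Definition Y_r : set 'cV[K]_n :=
  sumset (vsset Ur) (sspan [set invmx RU *m (b - A *m x) | x in vsset Ur]).

End Defs.

(* Main.v *)
Require Import Defs.
From HB Require Import structures.
From mathcomp Require Import all_boot all_order all_algebra.
From mathcomp Require Import boolp classical_sets reals.
From mathcomp.real_closed Require Import complex.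
Import Order.TTheory GRing.Theory Num.Theory.
Local Open Scope ring_scope.
Local Open Scope classical_set_scope.
Set Implicit Arguments.
Unset Strict Implicit.
Unset Printing Implicit Defensive.

Section KI.
Variables (R : realType) (c : scalar_kind).
Local Notation K := (Kfield R c).
Local Notation conj := (@Kconj R c).

Lemma Kconj_zmod : zmod_morphism conj.
Proof. by case: c => x y //=; rewrite rmorphB. Qed.
HB.instance Definition _ := GRing.isZmodMorphism.Build K K conj Kconj_zmod.
Lemma Kconj_mon : monoid_morphism conj.
Proof. rewrite /monoid_morphism; case: c; split; [| move=> x y| |move=> x y] => //; [exact: conjc1 | exact: rmorphM]. Qed.
HB.instance Definition _ := GRing.isMonoidMorphism.Build K K conj Kconj_mon.
Lemma Kre_zmod : zmod_morphism (@Kre R c).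
Proof. by case: c => x y //=; rewrite raddfB. Qed.
HB.instance Definition _ := GRing.isZmodMorphism.Build K R (@Kre R c) Kre_zmod.

Definition Kr : R -> K := match c return R -> Kfield R c with RealK => fun r => r | ComplexK => fun r => (r%:C)%C end.
Lemma KconjK x : conj (conj x) = x.
Proof. by case: c x => x //=; rewrite conjcK. Qed.
End KI.
Section KI2.
Variables (R : realType) (c : scalar_kind).
Local Notation K := (Kfield R c).
Local Notation conj := (@Kconj R c).
Local Notation Kr := (@Kr R c).
Local Notation Kre := (@Kre R c).
Local Notation Kabs := (@Kabs R c).
Open Scope complex_scope.

Lemma KrM a b : Kr (a * b) = Kr a * Kr b.
Proof. by rewrite /Kr; case: c => //=; rewrite rmorphM. Qed.
Lemma conj_Kr r : conj (Kr r) = Kr r.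
Proof. rewrite /Kr /Kconj; case: c => //; exact: conjc_real. Qed.
Lemma Kre_Kr r : Kre (Kr r) = r.
Proof. by rewrite /Kr; case: c. Qed.
Lemma KreMr r x : Kre (Kr r * x) = r * Kre x.
Proof. rewrite /Kr; case: c x => //= [[a b]] /=. by simpc. Qed.
Lemma Kre_conj x : Kre (conj x) = Kre x.
Proof. by case: c x => // - [a b]. Qed.
Lemma conj_mul_self x : conj x * x = Kr (Kabs x ^+ 2).
Proof.
rewrite /Kr; case: c x => /= [x|[a b]]; first by rewrite real_normK ?num_real // expr2.
rewrite sqr_sqrtr ?addr_ge0 ?sqr_ge0 //. simpc. apply/eqP; rewrite eq_complex /=. by rewrite !expr2 eqxx [a * b]mulrC subrr eqxx.
Qed.


Lemma Kabs_ge0 x : 0 <= Kabs x.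
Proof. by case: c x => /= [x|[a b]] //=; rewrite sqrtr_ge0. Qed.
Lemma KabsM x y : Kabs (x * y) = Kabs x * Kabs y.
Proof. case: c x y => /= x y; [exact: normrM | exact: ComplexField.Normc.normcM]. Qed.
Lemma Kabs_conj x : Kabs (conj x) = Kabs x.
Proof. case: c x => /= [x|[a b]] //=. by rewrite sqrrN. Qed.
Lemma KabsD x y : Kabs (x + y) <= Kabs x + Kabs y.
Proof. case: c x y => /= x y; [exact: ler_normD | exact: complex.le_normcD]. Qed.
Lemma KabsN x : Kabs (- x) = Kabs x.
Proof. case: c x => /= x; [exact: normrN | exact: complex.normcN]. Qed.
Lemma Kre_le_abs x : Kre x <= Kabs x.
Proof.
case: c x => /= [x|[a b]] /=; first exact: ler_norm.
apply: le_trans (ler_norm a) _; rewrite -sqrtr_sqr; apply: ler_wsqrtr.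
by rewrite lerDl sqr_ge0.
Qed.
Lemma Kabs_Kr r : Kabs (Kr r) = `|r|.
Proof. rewrite /Kr; case: c => //=. by rewrite expr0n /= addr0 sqrtr_sqr. Qed.
Lemma Kgt0_re x : 0 < x -> 0 < Kre x.
Proof. case: c x => //= x. by rewrite ltcE => /andP[]. Qed.
Lemma Kabs0 : Kabs 0 = 0.
Proof. by case: c => /=; [exact: normr0 | exact: ComplexField.Normc.normc0]. Qed.
End KI2.
Section KI3.
Variables (R : realType) (c : scalar_kind).
Local Notation K := (Kfield R c).
Local Notation conj := (@Kconj R c).
Local Notation Kre := (@Kre R c).
Lemma KconjM x y : conj (x * y) = conj x * conj y. Proof. exact: rmorphM. Qed.
Lemma KconjD x y : conj (x + y) = conj x + conj y. Proof. exact: rmorphD. Qed.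
Lemma KconjN x : conj (- x) = - conj x. Proof. exact: rmorphN. Qed.
Lemma Kconj0 : conj 0 = 0. Proof. exact: rmorph0. Qed.
Lemma Kconj_sum I (r : seq I) (P : pred I) (F : I -> K) :
  conj (\sum_(i <- r | P i) F i) = \sum_(i <- r | P i) conj (F i).
Proof. exact: rmorph_sum. Qed.
Lemma KreD x y : Kre (x + y) = Kre x + Kre y. Proof. exact: raddfD. Qed.
Lemma KreN x : Kre (- x) = - Kre x. Proof. exact: raddfN. Qed.
Lemma Kre_sum I (r : seq I) (P : pred I) (F : I -> K) :
  Kre (\sum_(i <- r | P i) F i) = \sum_(i <- r | P i) Kre (F i).
Proof. exact: raddf_sum. Qed.
End KI3.
Section Dot.
Variables (R : realType) (c : scalar_kind).
Local Notation K := (Kfield R c).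
Local Notation conj := (@Kconj R c).
Local Notation Kr := (@Kr R c).
Local Notation Kre := (@Kre R c).
Local Notation Kabs := (@Kabs R c).
Variable n : nat.
Implicit Types x y z : 'cV[K]_n.

Lemma dotpDr x y z : dotp x (y + z) = dotp x y + dotp x z.
Proof. rewrite /dotp -big_split; apply: eq_bigr => i _; by rewrite !mxE mulrDr. Qed.
Lemma dotpZr x y a : dotp x (a *: y) = a * dotp x y.
Proof. rewrite /dotp mulr_sumr; apply: eq_bigr => i _; by rewrite !mxE mulrCA. Qed.
Lemma dotpNr x y : dotp x (- y) = - dotp x y.
Proof. rewrite /dotp -sumrN; apply: eq_bigr => i _; by rewrite !mxE mulrN. Qed.
Lemma dotpC x y : dotp x y = conj (dotp y x).
Proof. rewrite /dotp Kconj_sum; apply: eq_bigr => i _; by rewrite KconjM KconjK mulrC. Qed.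
Lemma dotpDl x y z : dotp (x + y) z = dotp x z + dotp y z.
Proof. by rewrite dotpC dotpDr KconjD -!dotpC. Qed.
Lemma dotpZl x y a : dotp (a *: x) y = conj a * dotp x y.
Proof. by rewrite dotpC dotpZr KconjM -!dotpC. Qed.
Lemma dotpNl x y : dotp (- x) y = - dotp x y.
Proof. by rewrite dotpC dotpNr KconjN -!dotpC. Qed.
Lemma dotp0r x : dotp x 0 = 0.
Proof. by rewrite /dotp big1 // => i _; rewrite mxE mulr0. Qed.
Lemma dotp0l x : dotp 0 x = 0.
Proof. by rewrite dotpC dotp0r Kconj0. Qed.
Lemma dotp_adj x (M : 'M[K]_n) y : dotp x (M *m y) = dotp (adjmx M *m x) y.
Proof.
rewrite /dotp /adjmx.
under eq_bigr => i _ do rewrite mxE mulr_sumr.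
under [RHS]eq_bigr => j _ do rewrite mxE Kconj_sum mulr_suml.
rewrite exchange_big /=; apply: eq_bigr => j _; apply: eq_bigr => i _.
by rewrite !mxE KconjM KconjK mulrCA mulrA.
Qed.
Lemma Kre_dotp_self x : Kre (dotp x x) = \sum_i Kabs (x i 0) ^+ 2.
Proof. rewrite /dotp Kre_sum; apply: eq_bigr => i _; by rewrite conj_mul_self Kre_Kr. Qed.
Lemma Kre_dotp_ge0 x : 0 <= Kre (dotp x x).
Proof. by rewrite Kre_dotp_self sumr_ge0 // => i _; rewrite sqr_ge0. Qed.
End Dot.
From mathcomp Require Import ring lra.
Lemma quad_real (R : realType) (P Q Z : R) : 0 <= Z -> 0 <= Q ->
  (forall t : R, 0 <= P - t * Z - t * Z + t ^+ 2 * Z * Q) -> Z <= P * Q.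
Proof.
move=> Z0 Q0 H.
have P0 : 0 <= P by have := H 0; rewrite !mul0r !subr0 expr0n /= !mul0r addr0.
have [Qp|] := ltP 0 Q.
  have := H Q^-1.
  have -> : Q^-1 ^+ 2 * Z * Q = Q^-1 * Z by field; rewrite gt_eqF.
  rewrite -addrA [- _ + _]addrC subrr addr0 subr_ge0 => h.
  by rewrite -ler_pdivrMr // mulrC.
rewrite le_eqVlt ltNge Q0 orbF => /eqP Q00; subst Q; rewrite mulr0.
have [Zp|] := ltP 0 Z; last by [].
have := H ((P + 1) / Z).
rewrite mulr0 addr0 -mulrA mulVf ?gt_eqF // mulr1.
suff : P - (P + 1) - (P + 1) < 0 by move=> h1 h2; have := lt_le_trans h1 h2; rewrite ltxx.
lra.
Qed.

Section CS.
Variables (R : realType) (c : scalar_kind).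
Local Notation K := (Kfield R c).
Local Notation conj := (@Kconj R c).
Local Notation Kr := (@Kr R c).
Local Notation Kre := (@Kre R c).
Local Notation Kabs := (@Kabs R c).
Variables (n : nat) (H : 'M[K]_n).
Hypothesis hH : forall x y, dotp x (H *m y) = conj (dotp y (H *m x)).
Hypothesis hpos : forall x, 0 <= Kre (dotp x (H *m x)).

Lemma CS2 x y : Kabs (dotp x (H *m y)) ^+ 2 <= Kre (dotp x (H *m x)) * Kre (dotp y (H *m y)).
Proof.
set z := dotp x (H *m y).
apply: quad_real; [by rewrite sqr_ge0 | exact: hpos | move=> t].
set a := Kr (- t) * conj z.
have := hpos (x + a *: y).
rewrite mulmxDr -scalemxAr dotpDl !dotpDr !dotpZl !dotpZr -/z [dotp y (H *m x)]hH -/z.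
rewrite !KreD.
have e1 : a * z = Kr (- (t * Kabs z ^+ 2)) by rewrite /a -mulrA conj_mul_self -KrM mulNr.
have e2 : conj a * (a * dotp y (H *m y)) = Kr (t ^+ 2 * Kabs z ^+ 2) * dotp y (H *m y).
  rewrite mulrA [conj a * a]conj_mul_self /a KabsM Kabs_conj Kabs_Kr normrN.
  by rewrite exprMn real_normK ?num_real.
rewrite e1 e2 -KconjM e1 Kre_conj Kre_Kr KreMr.
move=> h; lra.
Qed.

Lemma CS x y : Kabs (dotp x (H *m y)) <= Num.sqrt (Kre (dotp x (H *m x))) * Num.sqrt (Kre (dotp y (H *m y))).
Proof.
rewrite -sqrtrM ?hpos // -(ger0_norm (Kabs_ge0 (dotp x (H *m y)))) -sqrtr_sqr.
exact/ler_wsqrtr/CS2.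
Qed.
End CS.
Section UNorm.
Variables (R : realType) (c : scalar_kind).
Local Notation K := (Kfield R c).
Local Notation conj := (@Kconj R c).
Local Notation Kr := (@Kr R c).
Local Notation Kre := (@Kre R c).
Local Notation Kabs := (@Kabs R c).
Variables (n : nat) (RU : 'M[K]_n).
Hypothesis hspd : spd RU.
Implicit Types x y z w v : 'cV[K]_n.

Lemma RU_herm x y : dotp x (RU *m y) = conj (dotp y (RU *m x)).
Proof. by rewrite [dotp y _]dotp_adj hspd.1 [dotp (RU *m y) x]dotpC KconjK. Qed.
Lemma RU_pos x : 0 <= Kre (dotp x (RU *m x)).
Proof.
have [->|/hspd.2 /Kgt0_re/ltW //] := eqVneq x 0.
by rewrite dotp0l raddf0.
Qed.
Lemma RU_posd x : x != 0 -> 0 < Kre (dotp x (RU *m x)).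
Proof. by move/hspd.2/Kgt0_re. Qed.
Lemma dotU_eq x y : dotU RU x y = dotp x (RU *m y).
Proof. by rewrite /dotU dotpC -RU_herm. Qed.
Lemma normU_eq x : normU RU x = Num.sqrt (Kre (dotp x (RU *m x))).
Proof. by rewrite /normU dotU_eq. Qed.
Lemma normU_ge0 x : 0 <= normU RU x.
Proof. exact: sqrtr_ge0. Qed.
Lemma normU_sq x : normU RU x ^+ 2 = Kre (dotU RU x x).
Proof. by rewrite normU_eq sqr_sqrtr ?RU_pos // dotU_eq. Qed.
Lemma normU_gt0 x : x != 0 -> 0 < normU RU x.
Proof. by move=> /RU_posd h; rewrite normU_eq sqrtr_gt0. Qed.
Lemma CS_U x y : Kabs (dotU RU x y) <= normU RU x * normU RU y.
Proof. by rewrite dotU_eq !normU_eq; apply: CS; [exact: RU_herm | exact: RU_pos]. Qed.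

Lemma one_herm x y : dotp x (1%:M *m y) = conj (dotp y (1%:M *m x)).
Proof. by rewrite !mul1mx -dotpC. Qed.
Lemma one_pos x : 0 <= Kre (dotp x (1%:M *m x)).
Proof. by rewrite mul1mx Kre_dotp_ge0. Qed.
Lemma CS_E x y : Kabs (dotp x y) <= enorm x * enorm y.
Proof. by have := CS one_herm one_pos x y; rewrite !mul1mx. Qed.
Lemma CS_E2 x y : Kabs (dotp x y) ^+ 2 <= Kre (dotp x x) * Kre (dotp y y).
Proof. by have := CS2 one_herm one_pos x y; rewrite !mul1mx. Qed.

Lemma RU_unit : RU \in unitmx.
Proof.
rewrite -unitmx_tr -row_free_unit -kermx_eq0; apply/eqP/row_matrixP => i.
rewrite row0; apply/eqP; apply: contraT => nz.
set u := row i _ in nz.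
have hu : u *m RU^T = 0 by rewrite /u -row_mul mulmx_ker row0.
have hx : RU *m u^T = 0 by rewrite -[RU]trmxK -trmx_mul hu trmx0.
have xnz : u^T != 0 by rewrite -[0]trmx0 (inj_eq (@trmx_inj _ _ _)).
by have := hspd.2 _ xnz; rewrite hx dotp0r ltxx.
Qed.
End UNorm.
Section Bounds.
Variables (R : realType) (c : scalar_kind).
Local Notation K := (Kfield R c).
Local Notation conj := (@Kconj R c).
Local Notation Kre := (@Kre R c).
Local Notation Kabs := (@Kabs R c).
Variables (n : nat) (RU : 'M[K]_n).
Hypothesis hspd : spd RU.
Implicit Types x y z w v : 'cV[K]_n.
Local Notation e x := (Kre (dotp x x)).
Local Notation q x := (Kre (dotp x (RU *m x))).

Lemma frob (M : 'M[K]_n) : exists2 F, 0 <= F & forall w, e (M *m w) <= F * e w.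
Proof.
pose m i : 'cV[K]_n := \col_j conj (M i j).
exists (\sum_i e (m i)); first by apply: sumr_ge0 => i _; exact: Kre_dotp_ge0.
move=> w; rewrite Kre_dotp_self mulr_suml; apply: ler_sum => i _.
have -> : (M *m w) i 0 = dotp (m i) w.
  by rewrite /dotp mxE; apply: eq_bigr => j _; rewrite mxE KconjK.
exact: CS_E2.
Qed.

Lemma q_le_e : exists2 D, 0 <= D & forall v, q v <= D * e v.
Proof.
have [F F0 hF] := frob RU.
exists (Num.sqrt F); first exact: sqrtr_ge0.
move=> v; apply: le_trans (Kre_le_abs _) _.
apply: le_trans (CS_E _ _) _.
rewrite /enorm -[X in _ <= _ * X]sqr_sqrtr ?Kre_dotp_ge0 // expr2 mulrA [X in _ <= X]mulrC.
apply: ler_wpM2l; first exact: sqrtr_ge0.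
by rewrite -sqrtrM // ler_wsqrtr.
Qed.

Lemma e_le_q : exists2 C, 0 <= C & forall w, e w <= C * q w.
Proof.
have [F F0 hF] := frob (invmx RU).
exists (Num.sqrt F); first exact: sqrtr_ge0.
move=> w; set z := invmx RU *m w.
have wz : w = RU *m z by rewrite /z mulmxA mulmxV ?RU_unit // mul1mx.
have qz : q z <= Num.sqrt F * e w.
  rewrite -wz; apply: le_trans (Kre_le_abs _) _.
  apply: le_trans (CS_E _ _) _.
  rewrite /enorm -[X in _ <= _ * X]sqr_sqrtr ?Kre_dotp_ge0 // expr2 mulrA.
  apply: ler_wpM2r; first exact: sqrtr_ge0.
  rewrite -sqrtrM //; apply: ler_wsqrtr; exact: hF.
have h2 : e w ^+ 2 <= q w * (Num.sqrt F * e w).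
  have h3 : e w ^+ 2 <= Kabs (dotp w (RU *m z)) ^+ 2.
    apply: lerXn2r; rewrite ?nnegrE ?Kre_dotp_ge0 ?Kabs_ge0 //.
    by rewrite -wz; exact: Kre_le_abs.
  apply: le_trans h3 _.
  apply: le_trans (CS2 (RU_herm hspd) (RU_pos hspd) w z) _.
  by apply: ler_wpM2l; [exact: RU_pos | exact: qz].
have [e0|ep] := eqVneq (e w) 0.
  by rewrite e0 mulr_ge0 ?sqrtr_ge0 ?RU_pos.
have ep' : 0 < e w by rewrite lt_def ep Kre_dotp_ge0.
rewrite -(ler_pM2r ep') -expr2; apply: le_trans h2 _.
by rewrite mulrA [q w * _]mulrC.
Qed.
End Bounds.

Section OpBound.
Variables (R : realType) (c : scalar_kind).
Local Notation K := (Kfield R c).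
Local Notation Kre := (@Kre R c).
Local Notation Kabs := (@Kabs R c).
Variables (n : nat) (RU : 'M[K]_n).
Hypothesis hspd : spd RU.
Local Notation e x := (Kre (dotp x x)).
Local Notation q x := (Kre (dotp x (RU *m x))).

Lemma op_bound (M : 'M[K]_n) : exists2 K0, 0 <= K0 & forall w, normU RU (M *m w) <= K0 * normU RU w.
Proof.
have [D D0 hD] := q_le_e RU.
have [F F0 hF] := frob M.
have [C C0 hC] := e_le_q hspd.
exists (Num.sqrt (D * F * C)); first exact: sqrtr_ge0.
move=> w; rewrite !normU_eq // -sqrtrM ?mulr_ge0 //; apply: ler_wsqrtr.
apply: le_trans (hD _) _; rewrite -!mulrA; apply: ler_wpM2l => //.
apply: le_trans (hF _) _; apply: ler_wpM2l => //; exact: hC.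
Qed.

Lemma dualU_eq y : dualU RU y = normU RU (invmx RU *m y).
Proof. by rewrite /dualU /normU /dotU mulmxA mulmxV ?RU_unit // mul1mx. Qed.
Lemma dotp_U y w : dotp y w = dotU RU (invmx RU *m y) w.
Proof. by rewrite /dotU mulmxA mulmxV ?RU_unit // mul1mx. Qed.
Lemma dual_bound y w : Kabs (dotp y w) <= dualU RU y * normU RU w.
Proof. by rewrite dotp_U dualU_eq; exact: CS_U. Qed.
Lemma dualU_ge0 y : 0 <= dualU RU y.
Proof. exact: sqrtr_ge0. Qed.
End OpBound.

Section SupInf.
Variables (R : realType) (c : scalar_kind) (n : nat).
Local Notation K := (Kfield R c).
Implicit Types (S : set 'cV[K]_n) (f : 'cV[K]_n -> R).

Lemma maxr_le S f B : 0 <= B -> (forall x, S x -> x != 0 -> f x <= B) -> maxr S f <= B.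
Proof.
move=> B0 hB; rewrite /maxr.
have [[_ [x [Sx x0] _]]|E0] := pselect ([set f x | x in [set x | S x /\ x != 0]] !=set0).
  apply: ge_sup; first by exists (f x), x.
  by move=> _ [z [Sz z0] <-]; exact: hB.
have -> : [set f x | x in [set x | S x /\ x != 0]] = set0.
  by apply/seteqP; split => // y Ey; apply: E0; exists y.
by rewrite sup0.
Qed.

Lemma maxr_ge0 S f : (forall x, S x -> x != 0 -> 0 <= f x) -> 0 <= maxr S f.
Proof.
move=> h; rewrite /maxr.
have [hs|hs] := pselect (has_sup [set f x | x in [set x | S x /\ x != 0]]); last by rewrite sup_out.
have [_ [x [Sx x0] _]] := hs.1.
apply: le_trans (h _ Sx x0) _; apply: sup_upper_bound => //; by exists x.
Qed.

Lemma le_maxr S f x B : S x -> x != 0 -> (forall x, S x -> x != 0 -> f x <= B) -> f x <= maxr S f.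
Proof.
move=> Sx x0 hB; apply: sup_upper_bound; last by exists x.
split; first by exists (f x), x.
by exists B => _ [z [Sz z0] <-]; exact: hB.
Qed.

Lemma minr_ge0 S f : (forall x, S x -> x != 0 -> 0 <= f x) -> 0 <= minr S f.
Proof.
move=> h; rewrite /minr.
have [[_ [x [Sx x0] _]]|E0] := pselect ([set f x | x in [set x | S x /\ x != 0]] !=set0).
  apply: lb_le_inf; first by exists (f x), x.
  by move=> _ [z [Sz z0] <-]; exact: h.
have -> : [set f x | x in [set x | S x /\ x != 0]] = set0.
  by apply/seteqP; split => // y Ey; apply: E0; exists y.
by rewrite inf0.
Qed.

Lemma minr_le S f x : (forall x, S x -> x != 0 -> 0 <= f x) -> S x -> x != 0 -> minr S f <= f x.
Proof.
move=> h Sx x0; apply: ge_inf; last by exists x.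
by exists 0 => _ [z [Sz z0] <-]; exact: h.
Qed.

Lemma le_minr S f x0 B : S x0 -> x0 != 0 -> (forall x, S x -> x != 0 -> B <= f x) -> B <= minr S f.
Proof.
move=> Sx0 x00 h; apply: lb_le_inf; first by exists (f x0), x0.
by move=> _ [z [Sz z0] <-]; exact: h.
Qed.

Lemma minr_empty S f : (forall x, S x -> x = 0) -> minr S f = 0.
Proof.
move=> h; rewrite /minr.
have -> : [set f x | x in [set x | S x /\ x != 0]] = set0.
  apply/seteqP; split => // y [x [Sx x0] _]; by rewrite (h _ Sx) eqxx in x0.
by rewrite inf0.
Qed.
End SupInf.
Section Spaces.
Variables (R : realType) (c : scalar_kind).
Local Notation K := (Kfield R c).
Variables (n : nat) (RU A : 'M[K]_n) (b u : 'cV[K]_n) (Ur : {vspace 'cV[K]_n}).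
Hypothesis hb : A *m u = b.

Lemma sspan0 (S : set 'cV[K]_n) : sspan S 0.
Proof. exists [::], [::]; split => //; by rewrite big_ord0. Qed.

Lemma Ur_in_Y w : vsset Ur w -> Y_r RU Ur A b w.
Proof. move=> hw; exists w => //; exists 0; [exact: sspan0 | exact: addr0]. Qed.

Lemma sspan_u v : sspan [set u] v -> exists a : K, v = a *: u.
Proof.
move=> [s [a [hs ->]]]; exists (\sum_(i < size s) a`_i); rewrite scaler_suml.
apply: eq_bigr => i _; congr (_ *: _); apply: hs; exact: mem_nth.
Qed.

Lemma AY x : sumset (sspan [set u]) (vsset Ur) x -> Y_r RU Ur A b (invmx RU *m (A *m x)).
Proof.
move=> [v /sspan_u [al ->] [xr hxr <-]].
exists 0; first by rewrite /vsset /= mem0v.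
exists (invmx RU *m (A *m (al *: u + xr))); last by rewrite add0r.
exists [:: invmx RU *m (b - A *m 0); invmx RU *m (b - A *m xr)], [:: al + 1; -1]; split.
  move=> y; rewrite !inE => /orP[] /eqP ->.
    by exists 0 => //; rewrite /vsset /= mem0v.
  by exists xr.
rewrite /= big_ord_recl big_ord_recl big_ord0 /= addr0.
rewrite mulmx0 subr0 !mulmxDr -!scalemxAr hb.
by rewrite mulmxN scalerDl scale1r scaleN1r opprD opprK addrA addrK.
Qed.
End Spaces.
Lemma G1r (R : realType) (p q T N D e s : R) : 0 < T -> 0 < N -> 0 < s -> s * N <= T ->
  0 <= p -> p <= q + e * D * N -> 0 <= q -> 0 <= e * D -> p / T <= (q / N + e * D) / s.
Proof.
move=> T0 N0 s0 hT p0 hp q0 eD0.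
set X := (q / N + e * D) / s.
have X0 : 0 <= X.
  apply: divr_ge0; [apply: addr_ge0 => //; apply: divr_ge0 => //; exact: ltW | exact: ltW].
have hX : X * s * N = q + e * D * N.
  by rewrite /X; field; rewrite !gt_eqF.
rewrite ler_pdivrMr //; apply: le_trans hp _; rewrite -hX -mulrA.
by apply: ler_wpM2l.
Qed.

Lemma G3r (R : realType) (p q T N D e s : R) : 0 < T -> 0 < N -> T <= s * N ->
  0 <= p -> q <= p + e * D * N -> q / N <= s * (p / T) + e * D.
Proof.
move=> T0 N0 hT p0 hq.
have h1 : q / N <= p / N + e * D.
  rewrite ler_pdivrMr // mulrDl divfK ?gt_eqF //.
have h2 : p / N <= s * (p / T).
  rewrite ler_pdivrMr //.
  have -> : s * (p / T) * N = (p / T) * (s * N) by ring.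
  rewrite -{1}(divfK (lt0r_neq0 T0) p); apply: ler_wpM2l => //.
  by rewrite divr_ge0 // ltW.
by apply: le_trans h1 _; rewrite lerD2r.
Qed.
Lemma le_sq (R : realType) (a b : R) : 0 <= b -> a ^+ 2 <= b ^+ 2 -> a <= b.
Proof. move=> b0 h; nra. Qed.

Section Main.
Variables (R : realType) (c : scalar_kind) (n k : nat).
Local Notation K := (Kfield R c).
Local Notation Kre := (@Kre R c).
Local Notation Kabs := (@Kabs R c).
Variables (RU A : 'M[K]_n) (b u : 'cV[K]_n) (Ur : {vspace 'cV[K]_n}) (Theta : 'M[K]_(k, n)) (eps : R).
Hypothesis hspd : spd RU.
Hypothesis hb : A *m u = b.
Hypothesis heps : 0 <= eps < 1.
Hypothesis hY : forall x y, Y_r RU Ur A b x -> Y_r RU Ur A b y ->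
     Kabs (dotU RU x y - dotp (Theta *m x) (Theta *m y))
       <= eps * normU RU x * normU RU y.

Let eps0 : 0 <= eps. Proof. by case/andP: heps. Qed.
Let eps1 : eps < 1. Proof. by case/andP: heps. Qed.
Let sm0 : 0 < Num.sqrt (1 - eps). Proof. by rewrite sqrtr_gt0 subr_gt0. Qed.
Let sp0 : 0 < Num.sqrt (1 + eps). Proof. by rewrite sqrtr_gt0 ltr_wpDr. Qed.

Lemma Th_bounds w : vsset Ur w -> w != 0 ->
  Num.sqrt (1 - eps) * normU RU w <= enorm (Theta *m w) /\
  enorm (Theta *m w) <= Num.sqrt (1 + eps) * normU RU w.
Proof.
move=> hw w0.
have hYw := Ur_in_Y RU A b hw.
have := hY hYw hYw.
set d := dotU RU w w - _.
have hN : Kre (dotU RU w w) = normU RU w ^+ 2 by rewrite normU_sq.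
have hT : Kre (dotp (Theta *m w) (Theta *m w)) = enorm (Theta *m w) ^+ 2.
  by rewrite /enorm sqr_sqrtr // Kre_dotp_ge0.
have h1 : normU RU w ^+ 2 - enorm (Theta *m w) ^+ 2 <= Kabs d.
  by rewrite -hN -hT -KreN -KreD; exact: Kre_le_abs.
have h2 : enorm (Theta *m w) ^+ 2 - normU RU w ^+ 2 <= Kabs d.
  by rewrite -hN -hT -KreN -KreD -KabsN opprB; exact: Kre_le_abs.
rewrite -mulrA -expr2 => hd.
have N0 := normU_ge0 RU w.
have T0 : 0 <= enorm (Theta *m w) by exact: sqrtr_ge0.
split.
  apply: le_sq => //; rewrite exprMn sqr_sqrtr ?subr_ge0 ?(ltW eps1) //.
  rewrite mulrBl mul1r; have := le_trans h1 hd; lra.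
apply: le_sq; first by rewrite mulr_ge0 ?sqrtr_ge0.
rewrite exprMn (@sqr_sqrtr _ (1 + eps)); last by rewrite addr_ge0.
rewrite mulrDl mul1r; have := le_trans h2 hd; lra.
Qed.

Lemma Y_bounds y w : Y_r RU Ur A b (invmx RU *m y) -> vsset Ur w ->
  Kabs (dotp (Theta *m (invmx RU *m y)) (Theta *m w)) <= Kabs (dotp y w) + eps * dualU RU y * normU RU w /\
  Kabs (dotp y w) <= Kabs (dotp (Theta *m (invmx RU *m y)) (Theta *m w)) + eps * dualU RU y * normU RU w.
Proof.
move=> hy hw; have := hY hy (Ur_in_Y RU A b hw).
rewrite -(dotp_U hspd) -(dualU_eq hspd).
set P := dotp (Theta *m _) _; set Q := dotp y w => h.
split.
  have eP : P = Q + - (Q - P) by rewrite opprB addrC subrK.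
  rewrite {1}eP; apply: le_trans (KabsD _ _) _; rewrite KabsN; exact: lerD.
have eQ : Q = P + (Q - P) by rewrite addrC subrK.
rewrite {1}eQ; apply: le_trans (KabsD _ _) _; exact: lerD.
Qed.

Lemma f_le_D y w : vsset Ur w -> w != 0 -> Kabs (dotp y w) / normU RU w <= dualU RU y.
Proof.
move=> hw w0; rewrite ler_pdivrMr ?(normU_gt0 hspd) //; exact: (dual_bound hspd).
Qed.

Lemma f_ge0 y w : 0 <= Kabs (dotp y w) / normU RU w.
Proof. by rewrite divr_ge0 ?Kabs_ge0 ?normU_ge0. Qed.

Lemma dualUr_le y : dualUr RU Ur y <= dualU RU y.
Proof. apply: maxr_le; [exact: dualU_ge0 | exact: f_le_D]. Qed.

Lemma dualUr_ge0 y : 0 <= dualUr RU Ur y.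
Proof. apply: maxr_ge0 => w _ _; exact: f_ge0. Qed.

Lemma f_le y w : vsset Ur w -> w != 0 -> Kabs (dotp y w) / normU RU w <= dualUr RU Ur y.
Proof. move=> hw w0; apply: (le_maxr hw w0); exact: f_le_D. Qed.

Lemma g_ge0 y w : 0 <= Kabs (dotp (Theta *m (invmx RU *m y)) (Theta *m w)) / enorm (Theta *m w).
Proof. by rewrite divr_ge0 ?Kabs_ge0 ?sqrtr_ge0. Qed.

Lemma dualUrTh_ge0 y : 0 <= dualUrTh RU Ur Theta y.
Proof. apply: maxr_ge0 => w _ _; exact: g_ge0. Qed.

Lemma g_le_f y w : Y_r RU Ur A b (invmx RU *m y) -> vsset Ur w -> w != 0 ->
  Kabs (dotp (Theta *m (invmx RU *m y)) (Theta *m w)) / enorm (Theta *m w)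
  <= (Kabs (dotp y w) / normU RU w + eps * dualU RU y) / Num.sqrt (1 - eps).
Proof.
move=> hy hw w0.
have [hTl _] := Th_bounds hw w0.
have N0 := normU_gt0 hspd w0.
have T0 : 0 < enorm (Theta *m w) by apply: lt_le_trans hTl; rewrite mulr_gt0.
apply: G1r => //; first exact: Kabs_ge0.
- by have [] := Y_bounds hy hw.
- exact: Kabs_ge0.
- by rewrite mulr_ge0 ?dualU_ge0.
Qed.

Lemma dualUrTh_le y : Y_r RU Ur A b (invmx RU *m y) ->
  dualUrTh RU Ur Theta y <= (dualUr RU Ur y + eps * dualU RU y) / Num.sqrt (1 - eps).
Proof.
move=> hy; apply: maxr_le.
  by rewrite divr_ge0 ?addr_ge0 ?mulr_ge0 ?dualU_ge0 ?dualUr_ge0 // ltW.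
move=> w hw w0; apply: le_trans (g_le_f hy hw w0) _.
apply: ler_wpM2r; first by rewrite invr_ge0; exact: ltW.
apply: lerD => //; exact: f_le.
Qed.

Lemma g_le y w : Y_r RU Ur A b (invmx RU *m y) -> vsset Ur w -> w != 0 ->
  Kabs (dotp (Theta *m (invmx RU *m y)) (Theta *m w)) / enorm (Theta *m w)
  <= dualUrTh RU Ur Theta y.
Proof.
move=> hy hw w0; apply: (le_maxr hw w0) => v hv v0.
apply: le_trans (g_le_f hy hv v0) _.
apply: ler_wpM2r; first by rewrite invr_ge0; exact: ltW.
apply: lerD => //; exact: (f_le_D _ hv v0).
Qed.

Lemma dualUr_ge y : Y_r RU Ur A b (invmx RU *m y) ->
  dualUr RU Ur y <= Num.sqrt (1 + eps) * dualUrTh RU Ur Theta y + eps * dualU RU y.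
Proof.
move=> hy; apply: maxr_le.
  by rewrite addr_ge0 ?mulr_ge0 ?dualU_ge0 ?dualUrTh_ge0 ?sqrtr_ge0.
move=> w hw w0.
have [hTl hTu] := Th_bounds hw w0.
have N0 := normU_gt0 hspd w0.
have T0 : 0 < enorm (Theta *m w) by apply: lt_le_trans hTl; rewrite mulr_gt0.
have [_ hq] := Y_bounds hy hw.
apply: le_trans (G3r T0 N0 hTu (Kabs_ge0 _) hq) _.
apply: lerD => //; apply: ler_wpM2l; [exact: sqrtr_ge0 | exact: g_le].
Qed.

Lemma sum_mem x : vsset Ur x -> sumset (sspan [set u]) (vsset Ur) x.
Proof. move=> hx; exists 0; first exact: sspan0. by exists x => //; rewrite add0r. Qed.

Lemma dA_bound : exists2 K0, 0 <= K0 & forall x, dualU RU (A *m x) <= K0 * normU RU x.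
Proof.
have [K0 K00 hK0] := op_bound hspd (invmx RU *m A).
by exists K0 => // x; rewrite (dualU_eq hspd) mulmxA; exact: hK0.
Qed.

Lemma partA : (Num.sqrt (1 + eps))^-1 * (1 - eps * a_r RU Ur A) * alpha_r RU Ur A
   <= alpha_rTh RU Ur Theta A.
Proof.
set ar := a_r RU Ur A; set al := alpha_r RU Ur A.
set Cc := (Num.sqrt (1 + eps))^-1 * (1 - eps * ar).
have aTh0 : 0 <= alpha_rTh RU Ur Theta A.
  by apply: minr_ge0 => x _ _; rewrite divr_ge0 ?dualUrTh_ge0 ?normU_ge0.
have fa0 : forall x, vsset Ur x -> x != 0 -> 0 <= dualUr RU Ur (A *m x) / normU RU x.
  by move=> x _ _; rewrite divr_ge0 ?dualUr_ge0 ?normU_ge0.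
have al0 : 0 <= al by apply: minr_ge0.
have [le0|gt0] := leP (Cc * al) 0; first exact: le_trans le0 aTh0.
have alp : 0 < al.
  by rewrite lt_def al0 andbT; apply: contraTneq gt0 => ->; rewrite mulr0 ltxx.
have Ccp : 0 < Cc by rewrite -(pmulr_lgt0 _ alp).
have [[y0 [hy0 y00]]|none] := pselect (exists x, vsset Ur x /\ x != 0); last first.
  have al00 : al = 0.
    apply: minr_empty => x hx; apply/eqP; apply: contraT => nz; by case: none; exists x.
  by rewrite al00 ltxx in alp.
have hal : forall x, vsset Ur x -> x != 0 -> al * normU RU x <= dualUr RU Ur (A *m x).
  move=> x hx xn0; rewrite -ler_pdivlMr ?(normU_gt0 hspd) //; exact: minr_le.
have [K0 K00 hdA] := dA_bound.
have hx_ar : forall x, vsset Ur x -> x != 0 -> dualU RU (A *m x) <= ar * dualUr RU Ur (A *m x).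
  move=> x hx x0.
  have dp : 0 < dualUr RU Ur (A *m x).
    by apply: lt_le_trans (hal _ hx x0); rewrite mulr_gt0 ?(normU_gt0 hspd).
  rewrite -ler_pdivrMr //; apply: (le_maxr hx x0) => w hw w0.
  have dw : 0 < dualUr RU Ur (A *m w).
    by apply: lt_le_trans (hal _ hw w0); rewrite mulr_gt0 ?(normU_gt0 hspd).
  rewrite ler_pdivrMr //; apply: le_trans (hdA w) _.
  have e1 : K0 * normU RU w = K0 / al * (al * normU RU w) by rewrite mulrA divfK ?lt0r_neq0.
  rewrite e1; apply: ler_wpM2l; [exact: divr_ge0 | exact: hal].
apply: (le_minr hy0 y00) => x hx x0.
have hy := AY RU hb (sum_mem hx).
have h1 := dualUr_ge hy.
have h2 := hx_ar x hx x0.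
have h3 := hal x hx x0.
rewrite ler_pdivlMr ?(normU_gt0 hspd) //.
set U := dualUr RU Ur (A *m x) in h1 h2 h3 *.
set Th := dualUrTh RU Ur Theta (A *m x) in h1 *.
set D := dualU RU (A *m x) in h1 h2.
apply: (@le_trans _ _ (Cc * U)).
  by rewrite -mulrA; apply: ler_wpM2l; [exact: ltW | exact: h3].
have h4 : eps * D <= eps * (ar * U) by apply: ler_wpM2l.
have h5 : (1 - eps * ar) * U <= Num.sqrt (1 + eps) * Th.
  have -> : (1 - eps * ar) * U = U - eps * (ar * U) by rewrite mulrBl mul1r mulrA.
  lra.
rewrite /Cc -mulrA; apply: (@le_trans _ _ ((Num.sqrt (1 + eps))^-1 * (Num.sqrt (1 + eps) * Th))).
  by apply: ler_wpM2l => //; rewrite invr_ge0; exact: ltW.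
by rewrite mulKf ?lt0r_neq0.
Qed.

Lemma partB : beta_rTh RU Ur Theta A u
   <= (Num.sqrt (1 - eps))^-1 * (beta_r RU Ur A u + eps * beta RU A).
Proof.
set br := beta_r RU Ur A u; set be := beta RU A.
have [K0 K00 hdA] := dA_bound.
have br0 : 0 <= br by apply: maxr_ge0 => x _ _; rewrite divr_ge0 ?dualUr_ge0 ?normU_ge0.
have be0 : 0 <= be by apply: maxr_ge0 => x _ _; rewrite divr_ge0 ?dualU_ge0 ?normU_ge0.
apply: maxr_le; first by rewrite mulr_ge0 ?invr_ge0 ?sqrtr_ge0 ?addr_ge0 ?mulr_ge0.
move=> x hx x0.
have N0 := normU_gt0 hspd x0.
have hy := AY RU hb hx.
have hB1 : dualUr RU Ur (A *m x) / normU RU x <= br.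
  apply: (le_maxr hx x0) => z hz z0.
  rewrite ler_pdivrMr ?(normU_gt0 hspd) //; exact: le_trans (dualUr_le _) (hdA z).
have hB2 : dualU RU (A *m x) / normU RU x <= be.
  apply: (@le_maxr _ _ _ setT _ x K0 I x0) => z _ z0.
  rewrite ler_pdivrMr ?(normU_gt0 hspd) //; exact: hdA.
have h1 := dualUrTh_le hy.
set U := dualUr RU Ur (A *m x) in h1 hB1 *.
set Th := dualUrTh RU Ur Theta (A *m x) in h1 *.
set D := dualU RU (A *m x) in h1 hB2 *.
set N := normU RU x in N0 hB1 hB2 *.
set sm := Num.sqrt (1 - eps) in h1 *.
have sm0p : 0 < sm by [].

apply: (@le_trans _ _ ((U + eps * D) / sm / N)).
  by apply: ler_wpM2r => //; rewrite invr_ge0; exact: ltW.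
have -> : (U + eps * D) / sm / N = sm^-1 * (U / N + eps * (D / N)).
  by field; rewrite !lt0r_neq0.
apply: ler_wpM2l; first by rewrite invr_ge0; exact: ltW.
apply: lerD => //; exact: ler_wpM2l.
Qed.
End Main.

Theorem proposition4p2 (R : realType) (c : scalar_kind) (n k : nat)
  (RU : 'M[Kfield R c]_n) (A : 'M[Kfield R c]_n) (b u : 'cV[Kfield R c]_n)
  (Ur : {vspace 'cV[Kfield R c]_n}) (Theta : 'M[Kfield R c]_(k, n)) (eps : R) :
  spd RU ->
  A *m u = b ->
  0 <= eps < 1 ->
  (forall x y, Y_r RU Ur A b x -> Y_r RU Ur A b y ->
     Kabs (dotU RU x y - dotp (Theta *m x) (Theta *m y))
       <= eps * normU RU x * normU RU y) ->
  alpha_rTh RU Ur Theta A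
    >= (Num.sqrt (1 + eps))^-1 * (1 - eps * a_r RU Ur A) * alpha_r RU Ur A
  /\ beta_rTh RU Ur Theta A u
    <= (Num.sqrt (1 - eps))^-1 * (beta_r RU Ur A u + eps * beta RU A).
Proof.
move=> hspd hb heps hY; split.
  exact: (partA hspd hb heps hY).
exact: (partB hspd hb heps hY).
Qed.
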